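(* Let $G=(\mathcal V,\mathcal E)$ be a strongly connected digraph with $N>2$ nodes and let the weights $p_{ij}(k)$, $\alpha_i(k)$ be generated as in the Privacy-Preserving Push-Sum Algorithm described in the context. For $k\ge 1$ define the $2N\times 2N$ matrices $$\hat P(k)=\begin{bmatrix} P(k) & I_N\\ \Lambda(k) & 0\end{bmatrix},\qquad P(k)=[p_{ij}(k)]_{i,j=1}^N,\quad \Lambda(k)=\mathrm{diag}(\alpha_1(k),\dots,\alpha_N(k)),$$ and $T_k=\hat P(k)\hat P(k-1)\cdots \hat P(1)$. Then the coefficient of ergodicity $\delta(T_k)$ converges to $0$ almost surely as $k\to\infty$.
   Context: Digraph conventions: $\mathcal V=\{1,\dots,N\}$, no self-loops; $(j,i)\in\mathcal E$ means node $i$ can send messages to node $j$. $N_i^{in}=\{j:(i,j)\in\mathcal E\}$, $N_i^{out}=\{j:(j,i)\in\mathcal E\}$. Strongly connected: a directed path exists from any node to any other node. Privacy-Preserving Push-Sum Algorithm (each node $i$ has a private real initial state $x_i(0)$; $M>0$ is a fixed constant). Initialization: node $i$ draws $x^\alpha_{i,1}(0)\sim U(-M,M)$ and sets $x^\beta_{i,1}(0)=2x_i(0)-x^\alpha_{i,1}(0)$, $x^\alpha_{i,2}(0)=0$, $x^\beta_{i,2}(0)=2$. Weights: at $k=0$, node $i$ draws the numbers $\{p_{ji}(0):j\in N_i^{out}\cup\{i\}\}$ and $\alpha_i(0)$ independently from $\mathcal N(0,M)$ and normalizes them so that $\sum_{j=1}^N p_{ji}(0)+\alpha_i(0)=1$;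 at each $k\ge1$, node $i$ draws $\{p_{ji}(k):j\in N_i^{out}\cup\{i\}\}$ and $\alpha_i(k)$ independently from $U(0,1)$ and normalizes them so that $\sum_{j=1}^N p_{ji}(k)+\alpha_i(k)=1$; in all cases $p_{ji}(k)=0$ if $j\notin N_i^{out}\cup\{i\}$. State update, for $k\ge0$, $l=1,2$: node $i$ sends $p_{ji}(k)x^\alpha_{i,l}(k)$ to each $j\in N_i^{out}$ and updates $$x^\alpha_{i,l}(k+1)=\sum_{j\in N_i^{in}\cup\{i\}}p_{ij}(k)x^\alpha_{j,l}(k)+x^\beta_{i,l}(k),\qquad x^\beta_{i,l}(k+1)=\alpha_i(k)x^\alpha_{i,l}(k).$$ Node $i$'s estimated average is $\hat x^{ave}_i(k+1)=x^\alpha_{i,1}(k+1)/x^\alpha_{i,2}(k+1)$. The substate $x^\beta_{i,l}$ is never transmitted. Coefficient of ergodicity: for a column-stochastic matrix $P_c$, $\delta(P_c)=\max_j\max_{i_1,i_2}|[P_c]_{j i_1}-[P_c]_{j i_2}|$. *)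

(* Defs.v *)
From HB Require Import structures.
From mathcomp Require Import all_boot all_order all_algebra.
From mathcomp Require Import all_classical all_reals all_analysis.
Set Implicit Arguments. Unset Strict Implicit. Unset Printing Implicit Defensive.
Import Order.TTheory GRing.Theory Num.Theory.
Import numFieldNormedType.Exports.
Local Open Scope classical_set_scope.
Local Open Scope ring_scope.

Definition mutually_independent d (T : measurableType d) (R : realType)
  (P : probability T R) (I : eqType) (D : set I) (X : I -> T -> R) : Prop :=
  forall (s : seq I) (B : I -> set R),
    uniq s -> (forall i, i \in s -> D i) -> (forall i, measurable (B i)) ->
    P (\big[setI/setT]_(i <- s) (X i @^-1` B i)) =
    (\big[*%E/1%E]_(i <- s) P (X i @^-1` B i))%E.

Definition uniform01 d (T : measurableType d) (R : realType)
  (P : probability T R) (X : T -> R) : Prop :=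
  measurable_fun setT X /\
  forall B : set R, measurable B ->
    P (X @^-1` B) = (@lebesgue_measure R) (B `&` `]0%R, 1%R[).

(* Graph: E j i (i.e. (j,i) \in E) means node i can send messages to node j. *)
Definition no_self_loops N (E : rel 'I_N) : Prop := forall i, ~~ E i i.
Definition sends N (E : rel 'I_N) : rel 'I_N := fun i j => E j i.
Definition strongly_connected N (E : rel 'I_N) : Prop :=
  forall a b : 'I_N, connect (sends E) a b.

Definition out_or_self N (E : rel 'I_N) (i j : 'I_N) : bool := E j i || (j == i).

(* Raw draws: W k i (Some j) is node i's draw for p_{ji}(k) (j in N_i^out or j = i),
   W k i None is node i's draw for alpha_i(k).  Relevant draws for k >= 1: *)
Definition relevant_index N (E : rel 'I_N) : set (nat * 'I_N * option 'I_N) :=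
  fun t => let: (k, i, o) := t in
    (0 < k)%N /\ (if o is Some j then out_or_self E i j else true).

Section Weights.
Variables (R : realType) (N : nat) (E : rel 'I_N) (Om : Type).
Variable W : nat -> 'I_N -> option 'I_N -> Om -> R.

Definition norm_sum (k : nat) (i : 'I_N) (w : Om) : R :=
  \sum_(j < N | out_or_self E i j) W k i (Some j) w + W k i None w.

(* p_{ij}(k): weight with which node j sends to node i *)
Definition pw (k : nat) (i j : 'I_N) (w : Om) : R :=
  if out_or_self E j i then W k j (Some i) w / norm_sum k j w else 0.

Definition alphaw (k : nat) (i : 'I_N) (w : Om) : R :=
  W k i None w / norm_sum k i w.

Definition Pmat (k : nat) (w : Om) : 'M[R]_N := \matrix_(i, j) pw k i j w.
Definition Lambda (k : nat) (w : Om) : 'M[R]_N := diag_mx (\row_i alphaw k i w).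

Definition Phat (k : nat) (w : Om) : 'M[R]_(N + N) :=
  block_mx (Pmat k w) 1%:M (Lambda k w) 0.

Fixpoint Tprod (k : nat) (w : Om) : 'M[R]_(N + N) :=
  match k with
  | 0 => 1%:M
  | k'.+1 => Phat k'.+1 w *m Tprod k' w
  end.
End Weights.

Definition ergodicity_coef (R : realType) n (M : 'M[R]_n) : R :=
  \big[Num.max/0]_(j < n) \big[Num.max/0]_(i1 < n) \big[Num.max/0]_(i2 < n)
     `|M j i1 - M j i2|.

(* Main.v *)
Require Import Defs.
From HB Require Import structures.
From mathcomp Require Import all_boot all_order all_algebra.
From mathcomp Require Import all_classical all_reals all_analysis.
Import Order.TTheory GRing.Theory Num.Theory.
Import numFieldNormedType.Exports.
Local Open Scope classical_set_scope.
Local Open Scope ring_scope.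
From mathcomp Require Import ring lra.

Section Gen.
Variables (R : realType) (n : nat).

Definition cstoch (M : 'M[R]_n) :=
  (forall i j, 0 <= M i j) /\ (forall j, \sum_i M i j = 1).

Definition cd (M : 'M[R]_n) i1 i2 := \sum_j `|M j i1 - M j i2|.

Lemma cstoch1 : cstoch 1%:M.
Proof.
split; first by move=> i j; rewrite mxE ler0n.
move=> j; rewrite (bigD1 j) //= big1 ?addr0.
  by rewrite mxE eqxx.
by move=> i ij; rewrite mxE (negbTE ij).
Qed.

Lemma cstochM (A B : 'M[R]_n) : cstoch A -> cstoch B -> cstoch (A *m B).
Proof.
move=> [A0 A1] [B0 B1]; split=> [i j|j].
  by rewrite mxE; apply: sumr_ge0 => k _; apply: mulr_ge0.
under eq_bigr do rewrite mxE.
rewrite exchange_big /= -(B1 j); apply: eq_bigr => k _.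
by rewrite -mulr_suml A1 mul1r.
Qed.

Lemma mul_diff (A M : 'M[R]_n) j i1 i2 :
  (A *m M) j i1 - (A *m M) j i2 = \sum_k A j k * (M k i1 - M k i2).
Proof.
rewrite !mxE -sumrB; apply: eq_bigr => k _; by rewrite mulrBr.
Qed.

Lemma cd_mul (A M : 'M[R]_n) i1 i2 : cstoch A -> cd (A *m M) i1 i2 <= cd M i1 i2.
Proof.
move=> [A0 A1]; rewrite /cd.
apply: (le_trans (y := \sum_j \sum_k A j k * `|M k i1 - M k i2|)).
  apply: ler_sum => j _; rewrite mul_diff.
  apply: (le_trans (ler_norm_sum _ _ _)); apply: ler_sum => k _.
  by rewrite normrM ger0_norm.
rewrite exchange_big /=; apply: ler_sum => k _.
by rewrite -mulr_suml A1 mul1r.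
Qed.

Lemma cd_contr (A M : 'M[R]_n) i1 i2 (g : R) : (0 < n)%N -> cstoch A -> cstoch M ->
  0 <= g -> (forall j k, g <= A j k) ->
  cd (A *m M) i1 i2 <= (1 - g) * cd M i1 i2.
Proof.
move=> n0 [A0 A1] [M0 M1] g0 Ag; rewrite /cd.
have sv : \sum_k (M k i1 - M k i2) = 0 by rewrite sumrB !M1 subrr.
apply: (le_trans (y := \sum_j \sum_k (A j k - g) * `|M k i1 - M k i2|)).
  apply: ler_sum => j _; rewrite mul_diff.
  have -> : \sum_k A j k * (M k i1 - M k i2) =
            \sum_k (A j k - g) * (M k i1 - M k i2).
    under [RHS]eq_bigr do rewrite mulrBl.
    by rewrite sumrB -mulr_sumr sv mulr0 subr0.
  apply: (le_trans (ler_norm_sum _ _ _)); apply: ler_sum => k _.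
  by rewrite normrM (ger0_norm (x := A j k - g)) // subr_ge0.
rewrite exchange_big /= mulr_sumr; apply: ler_sum => k _.
rewrite -mulr_suml sumrB A1 sumr_const card_ord.
apply: ler_wpM2r; first by [].
rewrite lerD2l lerN2 -mulr_natr -[X in X <= _]mulr1 ler_wpM2l // ler1n. exact: n0.
Qed.

Lemma cd_le2 (M : 'M[R]_n) i1 i2 : cstoch M -> cd M i1 i2 <= 2.
Proof.
move=> [M0 M1]; rewrite /cd.
apply: (le_trans (y := \sum_j (M j i1 + M j i2))).
  apply: ler_sum => j _; apply: (le_trans (ler_normB _ _)).
  by rewrite !ger0_norm.
by rewrite big_split /= !M1.
Qed.

Lemma erg_le_cd (M : 'M[R]_n) b : 0 <= b -> (forall i1 i2, cd M i1 i2 <= b) ->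
  ergodicity_coef M <= b.
Proof.
move=> b0 H; rewrite /ergodicity_coef.
apply: bigmax_le => // j _; apply: bigmax_le => // i1 _.
apply: bigmax_le => // i2 _.
apply: le_trans (H i1 i2); rewrite /cd (bigD1 j) //= lerDl.
by apply: sumr_ge0.
Qed.

Lemma erg_ge0 (M : 'M[R]_n) : 0 <= ergodicity_coef M.
Proof.
rewrite /ergodicity_coef; elim/big_rec: _ => // i x _ Hx.
by rewrite le_max Hx orbT.
Qed.

Variable A : nat -> 'M[R]_n.

Fixpoint tp k := match k with 0 => 1%:M | k'.+1 => A k'.+1 *m tp k' end.
Fixpoint seg b m := match m with 0 => 1%:M | m'.+1 => A (b + m'.+1) *m seg b m' end.

Lemma tp_seg b m : tp (b + m) = seg b m *m tp b.
Proof.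
elim: m => [|m IH] /=; first by rewrite addn0 mul1mx.
by rewrite addnS /= IH mulmxA.
Qed.

Hypothesis Acs : forall k, (0 < k)%N -> cstoch (A k).

Lemma tp_cs k : cstoch (tp k).
Proof. elim: k => [|k IH] /=; [exact: cstoch1 | apply: cstochM => //; exact: Acs]. Qed.

Lemma seg_cs b m : cstoch (seg b m).
Proof.
elim: m => [|m IH] /=; first exact: cstoch1.
by apply: cstochM => //; apply: Acs; rewrite addnS.
Qed.

Lemma tp_mono a k c : (a <= k)%N -> (forall i1 i2, cd (tp a) i1 i2 <= c) ->
  forall i1 i2, cd (tp k) i1 i2 <= c.
Proof.
move=> /subnKC <- H i1 i2; rewrite tp_seg.
exact: le_trans (cd_mul _ _ _ _ (seg_cs _ _)) (H i1 i2).
Qed.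

Lemma det_main (L : nat) (g : R) : (0 < n)%N -> 0 < g -> g <= 1 ->
  (forall a, exists b, (a <= b)%N /\ forall x y, g <= seg b L x y) ->
  (fun k => ergodicity_coef (tp k)) @ \oo --> (0 : R).
Proof.
move=> n0 g0 g1 good.
have step : forall r, exists K, forall i1 i2, cd (tp K) i1 i2 <= 2 * (1 - g) ^+ r.
  elim=> [|r [K HK]].
    by exists 0%N => i1 i2; rewrite expr0 mulr1; apply: cd_le2; apply: tp_cs.
  have [b [Kb Hb]] := good K.
  exists (b + L)%N => i1 i2; rewrite tp_seg.
  apply: le_trans (cd_contr _ _ i1 i2 g n0 (seg_cs _ _) (tp_cs _) (ltW g0) Hb) _.
  rewrite exprS mulrCA; apply: ler_wpM2l; first by rewrite subr_ge0.
  exact: tp_mono Kb HK i1 i2.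
apply/cvgrPdist_le => e e0.
have ce : (fun r => 2 * (1 - g) ^+ r) @ \oo --> (0 : R).
  rewrite -(mulr0 2); apply: cvgMr; apply: cvg_expr.
  by rewrite ger0_norm ?subr_ge0 // ltrBlDr ltrDl.
move/cvgrPdist_le: ce => /(_ e e0) [M _ HM].
have [K HK] := step M.
near=> k.
rewrite sub0r normrN ger0_norm ?erg_ge0 //.
have Kk : (K <= k)%N by near: k; exact: nbhs_infty_ge.
apply: erg_le_cd; first exact: ltW.
move=> i1 i2; apply: le_trans (tp_mono _ _ _ Kk HK i1 i2) _.
have := HM M (leqnn M); rewrite sub0r normrN ger0_norm //.
by apply: mulr_ge0 => //; apply: exprn_ge0; rewrite subr_ge0.
Unshelve. all: end_near.
Qed.

Variable adj : rel 'I_n.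
Fixpoint walk m x y := if m is m'.+1 then [exists z, adj x z && walk m' z y] else x == y.

Lemma walk_ext m x u y : adj x u -> walk m u y -> walk m.+1 x y.
Proof. by move=> H1 H2 /=; apply/existsP; exists u; rewrite H1. Qed.

Lemma walk_pad m x y : adj x x -> walk m x y -> walk m.+1 x y.
Proof. exact: walk_ext. Qed.

Lemma walk_prep m x z y : walk m x z -> adj z y -> walk m.+1 x y.
Proof.
elim: m x => [|m IH] x /=.
  by move=> /eqP -> H; apply/existsP; exists y; rewrite H eqxx.
move=> /existsP [u /andP [H1 H2]] H3; apply/existsP; exists u.
by rewrite H1 /=; exact: (IH _ H2 H3).
Qed.

Lemma seg_lb b m (c : R) : 0 <= c ->
  (forall t, (t < m)%N -> forall x y, adj x y -> c <= A (b + t.+1) x y) ->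
  forall x y, walk m x y -> c ^+ m <= seg b m x y.
Proof.
move=> c0; elim: m => [|m IH] H x y /=.
  by move=> /eqP ->; rewrite expr0 mxE eqxx.
move=> /existsP [z /andP [H1 H2]].
rewrite mxE (bigD1 z) //= exprS.
rewrite -[c * _]addr0; apply: lerD; last first.
  apply: sumr_ge0 => u _; apply: mulr_ge0.
    have [A0 _] : cstoch (A (b + m.+1)) by apply: Acs; rewrite addnS.
    exact: A0.
  by case: (seg_cs b m).
apply: ler_pM => //; first exact: exprn_ge0.
  by apply: H.
apply: IH => // t tm; apply: H; exact: ltnW.
Qed.
End Gen.
Arguments walk {n} adj m x y.
Arguments walk_prep {n adj m x z y}.
Arguments walk_ext {n adj m x u y}.
Arguments walk_pad {n adj m x y}.
Arguments cstoch {R n}.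
Arguments tp {R n}.
Arguments seg {R n}.

Section Graph.
Variables (N : nat) (E : rel 'I_N).

Definition adjP : rel 'I_(N + N) := fun x y =>
 [|| [exists i : 'I_N, exists j : 'I_N,
        [&& x == lshift N i, y == lshift N j & out_or_self E j i]],
     [exists i : 'I_N, (x == lshift N i) && (y == rshift N i)] |
     [exists i : 'I_N, (x == rshift N i) && (y == lshift N i)]].

Lemma adjLL i j : out_or_self E j i -> adjP (lshift N i) (lshift N j).
Proof.
move=> H; apply/orP; left; apply/existsP; exists i; apply/existsP; exists j.
by rewrite !eqxx H.
Qed.

Lemma adjLR i : adjP (lshift N i) (rshift N i).
Proof. by apply/orP; right; apply/orP; left; apply/existsP; exists i; rewrite !eqxx. Qed.

Lemma adjRL i : adjP (rshift N i) (lshift N i).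
Proof. by apply/orP; right; apply/orP; right; apply/existsP; exists i; rewrite !eqxx. Qed.

Lemma adjLself i : adjP (lshift N i) (lshift N i).
Proof. by apply: adjLL; rewrite /out_or_self eqxx orbT. Qed.

Lemma walk_padn m k x y : adjP x x -> walk adjP m x y -> walk adjP (m + k) x y.
Proof.
move=> Hx; elim: k => [|k IH]; first by rewrite addn0.
by move=> H; rewrite addnS; apply: walk_pad => //; apply: IH.
Qed.

Lemma walk_conn a b : connect (sends E) b a ->
  exists m, walk adjP m (lshift N a) (lshift N b).
Proof.
move=> /connectP [p Hp ->]; elim: p b Hp => [|c p IH] b /=.
  by move=> _; exists 0%N => /=.
move=> /andP [Hbc Hp]; have [m Hm] := IH c Hp.
exists m.+1; apply: walk_prep Hm _; apply: adjLL.
by rewrite /out_or_self -/(sends E b c) Hbc.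
Qed.

Lemma walk_unif : strongly_connected E ->
  exists D, forall a b, walk adjP D (lshift N a) (lshift N b).
Proof.
move=> sc.
suff : forall s : seq ('I_N * 'I_N), exists D, forall t, t \in s ->
  walk adjP D (lshift N t.1) (lshift N t.2).
  move=> /(_ (enum [set: 'I_N * 'I_N])) [D HD]; exists D => a b.
  by apply: (HD (a, b)); rewrite mem_enum inE.
elim=> [|t s [D2 H2]]; first by exists 0%N.
have [D1 H1] := @walk_conn t.1 t.2 (sc t.2 t.1).
exists (D1 + D2)%N => u; rewrite inE => /orP [/eqP ->|us].
  by apply: walk_padn => //; apply: adjLself.
rewrite addnC; apply: walk_padn; first exact: adjLself.
exact: H2.
Qed.

Lemma walk_all : strongly_connected E ->
  exists L, (0 < L)%N /\ forall x y, walk adjP L x y.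
Proof.
move=> /walk_unif [D HD]; exists D.+2; split => // x y.
case: (split_ordP x) => a ->; case: (split_ordP y) => b ->.
- by apply: walk_pad; first exact: adjLself; apply: walk_pad; first exact: adjLself.
- apply: walk_pad; first exact: adjLself.
  by apply: walk_prep (HD a b) _; apply: adjLR.
- apply: walk_ext; first exact: adjRL.
  by apply: walk_pad; first exact: adjLself.
- apply: walk_ext; first exact: adjRL.
  by apply: walk_prep (HD a b) _; apply: adjLR.
Qed.
End Graph.
Arguments adjP {N} E.

Section PhatSec.
Variables (R : realType) (N : nat) (E : rel 'I_N) (Om : Type)
  (W : nat -> 'I_N -> option 'I_N -> Om -> R).

Definition relo (i : 'I_N) (o : option 'I_N) : bool :=
  if o is Some j then out_or_self E i j else true.

Definition good01 k w := forall i o, relo i o -> 0 < W k i o w < 1.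
Definition goodh k w := forall i o, relo i o -> 1/2 <= W k i o w.

Definition cP : R := (2 * N.+1%:R)^-1.

Lemma ns_pos k w i : good01 k w -> 0 < norm_sum E W k i w.
Proof.
move=> g; rewrite /norm_sum; apply: ltr_wpDl.
  by apply: sumr_ge0 => j H; case/andP: (g i (Some j) H) => /ltW.
by case/andP: (g i None erefl).
Qed.

Lemma ns_le k w i : good01 k w -> norm_sum E W k i w <= N.+1%:R.
Proof.
move=> g; rewrite /norm_sum -addn1 natrD; apply: lerD; last first.
  by case/andP: (g i None erefl) => _ /ltW.
apply: (le_trans (y := \sum_(j < N) 1)); last by rewrite sumr_const card_ord.
rewrite big_mkcond /=; apply: ler_sum => j _; case: ifP => H.
  by case/andP: (g i (Some j) H) => _ /ltW.
exact: ler01.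
Qed.

Lemma cP_le a s : 1/2 <= a -> 0 < s -> s <= N.+1%:R -> cP <= a / s.
Proof.
move=> ha s0 sN; rewrite ler_pdivlMr // /cP.
have M0 : 0 < (N.+1%:R : R) by rewrite ltr0n.
apply: (le_trans (y := (2 * N.+1%:R)^-1 * N.+1%:R)).
  by apply: ler_wpM2l => //; rewrite invr_ge0 mulr_ge0 // ltW.
rewrite invfM -mulrA mulVf ?mulr1; last by rewrite gt_eqF.
by rewrite -div1r.
Qed.

Lemma cP_gt0 : 0 < cP.
Proof. by rewrite /cP invr_gt0 mulr_gt0 // ltr0n. Qed.

Lemma cP_le1 : cP <= 1.
Proof.
rewrite /cP invf_le1 ?mulr_gt0 ?ltr0n //.
by rewrite -natrM ler1n muln_gt0.
Qed.

Lemma pw_ge0 k w i j : good01 k w -> 0 <= pw E W k i j w.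
Proof.
move=> g; rewrite /pw; case: ifP => // H.
apply: divr_ge0; first by case/andP: (g j (Some i) H) => /ltW.
exact: ltW (ns_pos _ _ _ g).
Qed.

Lemma alphaw_ge0 k w i : good01 k w -> 0 <= alphaw E W k i w.
Proof.
move=> g; apply: divr_ge0; first by case/andP: (g i None erefl) => /ltW.
exact: ltW (ns_pos _ _ _ g).
Qed.

Lemma Phat_cs k w : good01 k w -> cstoch (Phat E W k w).
Proof.
move=> g; split.
  move=> x y; case: (split_ordP x) => i ->; case: (split_ordP y) => j ->;
    rewrite /Phat ?block_mxEul ?block_mxEur ?block_mxEdl ?block_mxEdr !mxE //.
  - exact: pw_ge0.
  - by apply: mulrn_wge0; apply: alphaw_ge0.
move=> y; rewrite big_split_ord /=; case: (split_ordP y) => j ->.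
  under eq_bigr do rewrite /Phat block_mxEul mxE.
  under [X in _ + X]eq_bigr do rewrite /Phat block_mxEdl /Lambda mxE mxE.
  rewrite [X in _ + X](bigD1 j) //= eqxx mulr1n [X in _ + (_ + X)]big1 ?addr0; last first.
    by move=> i /negbTE ->; rewrite mulr0n.
  rewrite /pw -big_mkcond /= -mulr_suml /alphaw -mulrDl -/(norm_sum E W k j w).
  by rewrite mulfV // gt_eqF // ns_pos.
under eq_bigr do rewrite /Phat block_mxEur mxE.
under [X in _ + X]eq_bigr do rewrite /Phat block_mxEdr mxE.
rewrite big1_eq addr0 (bigD1 j) //= eqxx [X in _ + X]big1 ?addr0 //.
by move=> i /negbTE ->.
Qed.

Lemma Phat_lb k w : good01 k w -> goodh k w ->
  forall x y, adjP E x y -> cP <= Phat E W k w x y.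
Proof.
move=> g h x y /or3P [/existsP [i /existsP [j /and3P [/eqP -> /eqP -> H]]]
  | /existsP [i /andP [/eqP -> /eqP ->]] | /existsP [i /andP [/eqP -> /eqP ->]]].
- rewrite /Phat block_mxEul mxE /pw H.
  apply: cP_le; [exact: h | exact: ns_pos | exact: ns_le].
- by rewrite /Phat block_mxEur mxE eqxx cP_le1.
- rewrite /Phat block_mxEdl /Lambda !mxE eqxx mulr1n.
  apply: cP_le; [exact: h | exact: ns_pos | exact: ns_le].
Qed.
End PhatSec.
Arguments good01 {R N} E {Om} W k w.
Arguments goodh {R N} E {Om} W k w.
Arguments relo {N} E i o.

Lemma Tprod_tp (R : realType) N (E : rel 'I_N) (Om : Type) W k (w : Om) :
  Tprod (R:=R) E W k w = tp (fun k => Phat E W k w) k.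
Proof. by elim: k => //= k ->. Qed.

Lemma det_Tprod (R : realType) N (E : rel 'I_N) (Om : Type)
  (W : nat -> 'I_N -> option 'I_N -> Om -> R) L (w : Om) :
  (0 < N)%N -> (forall x y, walk (adjP E) L x y) ->
  (forall k, (0 < k)%N -> good01 E W k w) ->
  (forall a, exists b, (a <= b)%N /\ forall t, (t < L)%N -> goodh E W (b + t.+1) w) ->
  (fun k => ergodicity_coef (Tprod E W k w)) @ \oo --> (0 : R).
Proof.
move=> N0 HL g01 gh.
have -> : (fun k => ergodicity_coef (Tprod E W k w)) =
          (fun k => ergodicity_coef (tp (fun k => Phat E W k w) k)).
  by apply: funext => k; rewrite Tprod_tp.
apply: (@det_main _ _ (fun k => Phat E W k w) _ L (cP R N ^+ L)).
- by move=> k k0; apply: Phat_cs; apply: g01.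
- by rewrite addn_gt0 N0.
- by apply: exprn_gt0; apply: cP_gt0.
- by apply: exprn_ile1; [apply: ltW; apply: cP_gt0 | apply: cP_le1].
move=> a; have [b [ab Hb]] := gh a; exists b; split => // x y.
apply: seg_lb => //.
- by move=> k k0; apply: Phat_cs; apply: g01.
- by apply: ltW; apply: cP_gt0.
move=> t tL x' y' H; apply: Phat_lb => //; last exact: Hb.
by apply: g01; rewrite addnS.
Qed.

Lemma mem_bigI (U : Type) (I : Type) (s : seq I) (F : I -> set U) (w : U) :
  (\big[setI/setT]_(i <- s) F i) w <-> (forall i, List.In i s -> F i w).
Proof.
elim: s => [|i s IH]; first by rewrite big_nil.
rewrite big_cons; split.
  by move=> [H1 /IH H2] j /= [<-|/H2].
move=> H; split; first by apply: H; left.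
by apply/IH => j js; apply: H; right.
Qed.

Section Prob.
Variables (d : measure_display) (T : measurableType d) (R : realType)
  (P : probability T R) (N : nat) (E : rel 'I_N)
  (W : nat -> 'I_N -> option 'I_N -> T -> R).
Hypothesis Hu : forall k i o, relevant_index E (k, i, o) -> uniform01 P (W k i o).
Hypothesis Hind : mutually_independent P (relevant_index E)
  (fun t => W t.1.1 t.1.2 t.2).

Definition X (t : nat * 'I_N * option 'I_N) := W t.1.1 t.1.2 t.2.
Definition Bh : set R := `[(2^-1 : R), +oo[.

Lemma meas_bigI (I : Type) (s : seq I) (F : I -> set T) :
  (forall i, List.In i s -> measurable (F i)) ->
  measurable (\big[setI/setT]_(i <- s) F i).
Proof.
elim: s => [|i s IH] H; first by rewrite big_nil.
rewrite big_cons; apply: measurableI; first by apply: H; left.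
by apply: IH => j js; apply: H; right.
Qed.

Lemma meas_pre t (A : set R) : relevant_index E t -> measurable A ->
  measurable (X t @^-1` A).
Proof.
case: t => [[k i] o] rel mA.
have [mf _] := Hu k i o rel.
by have := mf measurableT A mA; rewrite setTI.
Qed.

Lemma PX_half t : relevant_index E t -> P (X t @^-1` Bh) = (2^-1)%:E.
Proof.
case: t => [[k i] o] rel.
have [_ ->] := Hu k i o rel; last exact: measurable_itv.
have -> : Bh `&` `]0%R, 1%R[ = [set` `[(2^-1 : R), 1%R[].
  apply/seteqP; split => x /=; rewrite /Bh /= !in_itv /= ?andbT.
    move=> [H1 /andP [H2 H3]]; by rewrite H1 H3.
  move=> /andP [H1 H2]; split => //; rewrite H2 andbT.
  by apply: lt_le_trans H1; rewrite invr_gt0.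
rewrite lebesgue_measure_itv /= lte_fin ifT; last first.
  by rewrite invf_lt1 // ltr1n.
by rewrite -EFinB; congr (_%:E); field.
Qed.

Lemma PX_bad t : relevant_index E t -> P (X t @^-1` (~` `]0%R, 1%R[)) = 0.
Proof.
case: t => [[k i] o] rel.
have [_ ->] := Hu k i o rel; last by apply: measurableC; exact: measurable_itv.
by rewrite setICl measure0.
Qed.


Variable L : nat.
Hypothesis L0 : (0 < L)%N.

Definition rl : seq ('I_N * option 'I_N) :=
  [seq x <- enum [set: 'I_N * option 'I_N] | relo E x.1 x.2].
Definition tl : seq (nat * ('I_N * option 'I_N)) :=
  [seq (t, x) | t <- iota 0 L, x <- rl].
Definition idx m (tx : nat * ('I_N * option 'I_N)) : nat * 'I_N * option 'I_N :=
  ((m * L + tx.1.+1)%N, tx.2.1, tx.2.2).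
Definition Gd m := \big[setI/setT]_(tx <- tl) X (idx m tx) @^-1` Bh.
Definition q : R := (2^-1) ^+ size tl.

Lemma tl_mem tx : tx \in tl -> (tx.1 < L)%N /\ relo E tx.2.1 tx.2.2.
Proof.
move=> /allpairsP [[t x] [/= Ht Hx ->]] /=.
rewrite mem_iota add0n in Ht; split => //.
by move: Hx; rewrite mem_filter => /andP [].
Qed.

Lemma idx_rel m tx : tx \in tl -> relevant_index E (idx m tx).
Proof.
move=> /tl_mem [_ H]; rewrite /idx /relevant_index; split; last by move: H; rewrite /relo; case: (tx.2.2).
by rewrite addnS.
Qed.

Lemma inE_In (I : eqType) (s : seq I) i : List.In i s -> i \in s.
Proof.
elim: s => //= j s IH [->|/IH]; rewrite inE ?eqxx //.
by move=> ->; rewrite orbT.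
Qed.

Lemma Gd_meas m : measurable (Gd m).
Proof.
apply: meas_bigI => tx /inE_In H; apply: meas_pre; last exact: measurable_itv.
exact: idx_rel.
Qed.

Lemma arith_blk m m' t t' : (t < L)%N -> (t' < L)%N ->
  (m * L + t = m' * L + t')%N -> m = m' /\ t = t'.
Proof.
move=> tL t'L H.
have := congr1 (divn^~ L) H; rewrite !divnMDl // !divn_small // !addn0 => Em.
by subst; split => //; move/eqP: H; rewrite eqn_add2l => /eqP.
Qed.

Lemma tl_uniq : uniq tl.
Proof.
apply: allpairs_uniq; first exact: iota_uniq.
  by apply: filter_uniq; apply: enum_uniq.
by move=> [a b] [c e] _ _ /=.
Qed.

Lemma joint_uniq U : uniq U -> uniq [seq idx m tx | m <- U, tx <- tl].
Proof.
move=> uU; apply: allpairs_uniq => //; first exact: tl_uniq.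
move=> [m [t x]] [m' [t' x']] /allpairsP [[a b] [/= _ Hb [-> ->]]]
  /allpairsP [[a' b'] [/= _ Hb' [-> ->]]].
case: b Hb => t1 x1 Hb; case: b' Hb' => t2 x2 Hb'.
rewrite /idx /= => [[H1 H2 H3]].
have [/= tL _] := tl_mem _ Hb; have [/= tL' _] := tl_mem _ Hb'.
move: H1; rewrite !addnS => /eqP; rewrite eqSS => /eqP /(arith_blk _ _ _ _ tL tL') [-> ->].
by case: x1 x2 H2 H3 {Hb Hb'} => [i o] [i' o'] /= -> ->.
Qed.

Lemma prodE_const (I : Type) (s : seq I) (c : R) :
  \big[*%E/1%E]_(i <- s) (c%:E) = (c ^+ size s)%:E.
Proof.
elim: s => [|i s IH]; first by rewrite big_nil expr0.
by rewrite big_cons IH /= exprS EFinM.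
Qed.

Lemma PGd_joint U : uniq U -> P (\big[setI/setT]_(m <- U) Gd m) = (q ^+ size U)%:E.
Proof.
move=> uU.
have -> : \big[setI/setT]_(m <- U) Gd m =
  \big[setI/setT]_(u <- [seq idx m tx | m <- U, tx <- tl]) X u @^-1` Bh.
  by rewrite big_allpairs_dep.
rewrite (Hind _ (fun _ => Bh)) //; first last.
- by move=> _; exact: measurable_itv.
- by move=> u /allpairsP [[m tx] [/= _ H ->]]; apply: idx_rel.
- exact: joint_uniq.
rewrite big_seq (eq_bigr (fun _ => (2^-1)%:E)); last first.
  move=> u /allpairsP [[m tx] [/= _ H ->]]; apply: PX_half; exact: idx_rel.
by rewrite -big_seq prodE_const size_allpairs /q -exprM mulnC.
Qed.


Lemma PGd m : P (Gd m) = q%:E.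
Proof. by have := PGd_joint [:: m] erefl; rewrite big_seq1 expr1. Qed.

Lemma bigGd_meas U : measurable (\big[setI/setT]_(m <- U) Gd m).
Proof. by apply: meas_bigI => m _; apply: Gd_meas. Qed.

Lemma bigGdC_meas S : measurable (\big[setI/setT]_(m <- S) ~` Gd m).
Proof. by apply: meas_bigI => m _; apply: measurableC; apply: Gd_meas. Qed.

Lemma incl_excl S U : uniq (S ++ U) ->
  P ((\big[setI/setT]_(m <- S) ~` Gd m) `&` (\big[setI/setT]_(m <- U) Gd m))
  = (((1 - q) ^+ size S) * q ^+ size U)%:E.
Proof.
elim: S U => [|m S IH] U uSU.
  by rewrite big_nil setTI PGd_joint // expr0 mul1r.
set A := (\big[setI/setT]_(m <- S) ~` Gd m) `&` (\big[setI/setT]_(m <- U) Gd m).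
have mA : measurable A by apply: measurableI; [exact: bigGdC_meas | exact: bigGd_meas].
have -> : (\big[setI/setT]_(m0 <- m :: S) ~` Gd m0) `&`
          (\big[setI/setT]_(m0 <- U) Gd m0) = A `\` Gd m.
  by rewrite big_cons setDE /A -setIA setIC.
have mD : P (A `\` Gd m) = (P A - P (A `&` Gd m))%E.
  apply: measureD => //; first exact: Gd_meas.
  by apply: le_lt_trans (probability_le1 P mA) _; rewrite ltry.
rewrite mD.
have -> : A `&` Gd m = (\big[setI/setT]_(m0 <- S) ~` Gd m0) `&`
          (\big[setI/setT]_(m0 <- m :: U) Gd m0).
  by rewrite big_cons /A setIAC -setIA [Gd m `&` _]setIC.
rewrite (IH (m :: U)); last first.
  have pm : perm_eq (S ++ m :: U) (m :: S ++ U) by rewrite -cat1s perm_catCA.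
  by rewrite (perm_uniq pm).
rewrite /A (IH U); last by move: uSU; rewrite /= => /andP [].
rewrite -EFinB; congr (_%:E) => /=; rewrite !exprS; ring.
Qed.

Lemma q_gt0 : 0 < q.
Proof. by rewrite /q exprn_gt0 // invr_gt0. Qed.

Lemma q_le1 : q <= 1.
Proof. by rewrite /q exprn_ile1 // ?invr_ge0 // invf_le1 // ler1n. Qed.

Definition Zs a := \bigcap_(m in [set m | (a <= m)%N]) ~` Gd m.

Lemma Zs_negl a : P.-negligible (Zs a).
Proof.
have mZ : measurable (Zs a).
  by apply: bigcap_measurableType => m _; apply: measurableC; apply: Gd_meas.
suff P0 : P (Zs a) = 0 by apply/negligibleP.
have bound : forall r, (P (Zs a) <= ((1 - q) ^+ r)%:E)%E.
  move=> r.
  have := incl_excl (iota a r) [::]; rewrite cats0 iota_uniq => /(_ erefl).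
  rewrite big_nil setIT size_iota expr0 mulr1 => <-.
  apply: le_measure; rewrite ?inE //; first exact: bigGdC_meas.
  move=> w Zw; apply/mem_bigI => m /inE_In; rewrite mem_iota => /andP [am _].
  exact: Zw.
have fZ : P (Zs a) \is a fin_num.
  rewrite ge0_fin_numE ?measure_ge0 //.
  by apply: le_lt_trans (probability_le1 P mZ) _; rewrite ltry.
rewrite -(fineK fZ); congr (_%:E).
set z := fine (P (Zs a)).
have z0 : 0 <= z by rewrite /z fine_ge0 ?measure_ge0.
have zr : forall r, z <= (1 - q) ^+ r.
  by move=> r; rewrite -lee_fin /z fineK //; apply: bound.
apply/eqP; rewrite eq_le z0 andbT; apply/negP => /negP; rewrite -ltNge => zpos.
have ce : (GRing.exp (1 - q)) @ \oo --> (0 : R).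
  apply: cvg_expr; rewrite ger0_norm ?subr_ge0 ?q_le1 //.
  by rewrite ltrBlDr ltrDl q_gt0.
move/cvgrPdist_lt: ce => /(_ z zpos) [M _ HM].
have := HM M (leqnn M); rewrite sub0r normrN ger0_norm; last first.
  by apply: exprn_ge0; rewrite subr_ge0 q_le1.
by rewrite ltNge zr.
Qed.

End Prob.

Lemma In_inE (I : eqType) (s : seq I) i : i \in s -> List.In i s.
Proof.
elim: s => //= j s IH; rewrite inE => /orP [/eqP ->|/IH]; by [left | right].
Qed.

Lemma negl_bigU d (T : measurableType d) (R : realType) (P : probability T R)
  (I : Type) (s : seq I) (F : I -> set T) :
  (forall i, P.-negligible (F i)) -> P.-negligible (\big[setU/set0]_(i <- s) F i).
Proof.
move=> H; elim: s => [|i s IH]; first by rewrite big_nil; exact: negligible_set0.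
by rewrite big_cons; apply: negligibleU.
Qed.

Lemma mem_bigU (U I : Type) (s : seq I) (F : I -> set U) (w : U) i :
  List.In i s -> F i w -> (\big[setU/set0]_(i <- s) F i) w.
Proof.
elim: s => [|j s IH] //= [->|/IH H] Fw; rewrite big_cons; [by left | by right; apply: H].
Qed.

Theorem lemma1 (d : measure_display) (T : measurableType d) (R : realType)
  (P : probability T R) (N : nat) (E : rel 'I_N)
  (W : nat -> 'I_N -> option 'I_N -> T -> R) :
  (2 < N)%N ->
  no_self_loops E ->
  strongly_connected E ->
  (forall k i o, relevant_index E (k, i, o) -> uniform01 P (W k i o)) ->
  mutually_independent P (relevant_index E) (fun t => W t.1.1 t.1.2 t.2) ->
  {ae P, forall w, (fun k => ergodicity_coef (Tprod E W k w)) @ \oo --> (0 : R)}.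
Proof.
move=> N2 _ sc Hu Hind.
have N0 : (0 < N)%N by apply: leq_trans N2.
have [L [L0 HL]] := walk_all _ _ sc.
set bad := fun k : nat => \big[setU/set0]_(t <- enum [set: 'I_N * option 'I_N])
  (if relo E t.1 t.2 then @X d T R N W (k.+1, t.1, t.2) @^-1` (~` `]0%R, 1%R[) else set0).
have nbad : forall k, P.-negligible (bad k).
  move=> k; apply: negl_bigU => t; case: ifP => H; last exact: negligible_set0.
  have rel : relevant_index E (k.+1, t.1, t.2).
    by split => //; move: H; rewrite /relo; case: (t.2).
  apply/negligibleP; first by apply: (@meas_pre d T R P N E W Hu) => //; apply: measurableC; apply: measurable_itv.
  exact: (@PX_bad d T R P N E W Hu).
suff : P.-negligible ((\bigcup_k bad k) `|` (\bigcup_a Zs d T R N E W L a)).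
  move=> H; change (P.-negligible (~` [set w | (fun k => ergodicity_coef (Tprod E W k w)) @ \oo --> (0 : R)])).
  apply: negligibleS H => w /= nQ; apply: contrapT => nB; apply: nQ.
  apply: (@det_Tprod R N E T W L) => //.
  - move=> [//|k] _ i o ro; apply: contrapT => nio; apply: nB; left; exists k => //.
    apply: (@mem_bigU _ _ _ _ _ (i, o)); first by apply: In_inE; rewrite mem_enum inE.
    rewrite /= ro /= /X /=; rewrite in_itv /=; exact/negP/negP/negP/negP/negP/negP.
  - move=> a; apply: contrapT => nex; apply: nB; right; exists a => //.
    move=> m /= am Gm; apply: nex; exists (m * L)%N; split.
      by apply: leq_trans am _; apply: leq_pmulr.
    move=> t tL i o ro.
    rewrite /Gd in Gm; move/mem_bigI: Gm => /(_ (t, (i, o))).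
    rewrite /Bh /= in_itv /= andbT div1r; apply; apply: In_inE.
    apply/allpairsP; exists (t, (i, o)); split => //=.
      by rewrite mem_iota add0n.
    by rewrite mem_filter mem_enum in_setT andbT.
apply: negligibleU; apply: negligible_bigcup => k //.
exact: (@Zs_negl d T R P N E W Hu Hind L L0).
Qed.
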